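(* Assume $c_1c_2<1$ (in addition to $a_ia_j<1$, $a_ic_1<1$, $a_ic_2<1$). Let $\mathcal P$ be the horizontal path with vertices $(k+j,k)$, $0\le j\le N$, and labels $\boldsymbol b=(b_1,\dots,b_N)$, $b_j=a_{k+j}$. Then the probability mass function $\mathrm P^{\mathcal P}$ on $\mathbb Z^N$ coincides with $\mathrm P^{\boldsymbol b,c_1,c_2}_{\mathrm{stat\,Geo}}$.
   Context: Parameters: $N\ge1$, $a_1,\dots,a_N\in(0,1)$, $c_1,c_2>0$, indices of $a$ taken mod $N$. For the horizontal path, for $\boldsymbol\lambda=(\lambda_i^{(j)})_{i\in\{1,2\},0\le j\le N}\in\mathbb Z^{2N+2}$ define $$\mathrm{wt}^{\mathcal{GP}}(\boldsymbol\lambda)=c_1^{\lambda_1^{(0)}-\lambda_2^{(0)}}c_2^{\lambda_1^{(N)}-\lambda_2^{(N)}}\prod_{j=1}^N\Big[\prod_{i=1}^2b_j^{\lambda_i^{(j)}-\lambda_i^{(j-1)}}\mathbf 1\{\lambda_i^{(j)}\ge\lambda_i^{(j-1)}\}\Big]\mathbf 1\{\lambda_1^{(j-1)}\ge\lambda_2^{(j)}\},$$ $\mathrm{wt}^{\mathcal P}(\boldsymbol\lambda_1)=\sum_{\boldsymbol\lambda_2\in\mathbb Z^{N+1}}\mathrm{wt}^{\mathcal{GP}}(\boldsymbol\lambda_1,\boldsymbol\lambda_2)$, $Z=\sum_{\lambda_1^{(1)},\dots,\lambda_1^{(N)}\in\mathbb Z}\mathrm{wt}^{\mathcal P}(\boldsymbol\lambda_1)$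 for fixed $\lambda_1^{(0)}$ (finite, independent of $\lambda_1^{(0)}$ when $c_1c_2<1$), and $\mathrm P^{\mathcal P}(\mathbf L_1)=\mathrm{wt}^{\mathcal P}(\boldsymbol\lambda_1)/Z$ where $L_1(j)=\lambda_1^{(j)}-\lambda_1^{(0)}$. $\mathbb P^{\boldsymbol b,\boldsymbol b}_{\mathrm{GRW}}$: law of two independent walks $\mathbf L_1,\mathbf L_2$ with $L_i(0)=0$ and independent increments $L_i(j)-L_i(j-1)\sim\mathrm{Geom}(b_j)$ ($\mathbb P(\mathrm{Geom}(q)=n)=(1-q)q^n$). $V(\mathbf L)=(c_1c_2)^{\max_{1\le j\le N}(L_2(j)-L_1(j-1))}c_2^{L_1(N)-L_2(N)}$, $\mathbb P^{\boldsymbol b,c_1,c_2}_{\mathrm{stat\,Geo}}=V\,\mathbb P^{\boldsymbol b,\boldsymbol b}_{\mathrm{GRW}}/\mathbb E^{\boldsymbol b,\boldsymbol b}_{\mathrm{GRW}}[V]$, and $\mathrm P^{\boldsymbol b,c_1,c_2}_{\mathrm{stat\,Geo}}$ is the marginal law of $\mathbf L_1$. *)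

(* Defs.v *)
From HB Require Import structures.
From mathcomp Require Import all_boot all_order all_algebra.
From mathcomp Require Import all_classical all_reals.
From mathcomp Require Import ereal esum.
Unset Printing Implicit Defensive.
Import Order.TTheory GRing.Theory Num.Theory.
Local Open Scope ring_scope.

(* Paths are functions nat -> int; only indices 0..N are used.
   b : nat -> R gives the labels b_1..b_N (b 0 unused). *)

Section Defs.
Variable R : realType.

Definition ext0 {n : nat} (v : 'I_n -> int) (j : nat) : int :=
  match (insub j : option 'I_n) with Some i => v i | None => 0 end.

(* the path x0, v_1, ..., v_N  (v : 'I_N, v i = value at index i+1) *)
Definition path_of {n : nat} (x0 : int) (v : 'I_n -> int) (j : nat) : int :=
  if j is j'.+1 then ext0 v j' else x0.

Definition wtGP (N : nat) (b : nat -> R) (c1 c2 : R) (l1 l2 : nat -> int) : R :=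
  c1 ^ (l1 0%N - l2 0%N) * c2 ^ (l1 N - l2 N) *
  \prod_(1 <= j < N.+1)
     ( (b j ^ (l1 j - l1 j.-1) * ((l1 j.-1 <= l1 j)%R : bool)%:R)
     * (b j ^ (l2 j - l2 j.-1) * ((l2 j.-1 <= l2 j)%R : bool)%:R)
     * ((l2 j <= l1 j.-1)%R : bool)%:R ).

Definition wtP (N : nat) (b : nat -> R) (c1 c2 : R) (l1 : nat -> int) : \bar R :=
  \esum_(v in [set: {ffun 'I_N.+1 -> int}]) (wtGP N b c1 c2 l1 (ext0 v))%:E.

Definition PZ (N : nat) (b : nat -> R) (c1 c2 : R) (x0 : int) : \bar R :=
  \esum_(v in [set: {ffun 'I_N -> int}]) wtP N b c1 c2 (path_of x0 v).

Definition PP (N : nat) (b : nat -> R) (c1 c2 : R) (x0 : int)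
    (L1 : {ffun 'I_N -> int}) : R :=
  fine (wtP N b c1 c2 (path_of x0 (fun i => x0 + L1 i)))
    / fine (PZ N b c1 c2 x0).

Definition geom_pmf (q : R) (n : int) : R := ((0 <= n)%R : bool)%:R * ((1 - q) * q ^ n).

Definition PGRW (N : nat) (b : nat -> R) (L1 L2 : nat -> int) : R :=
  \prod_(1 <= j < N.+1)
     (geom_pmf (b j) (L1 j - L1 j.-1) * geom_pmf (b j) (L2 j - L2 j.-1)).

Definition Vfun (N : nat) (c1 c2 : R) (L1 L2 : nat -> int) : R :=
  (c1 * c2) ^ (\big[Num.max/(L2 1%N - L1 0%N)]_(1 <= j < N.+1) (L2 j - L1 j.-1))
  * c2 ^ (L1 N - L2 N).

Definition EV (N : nat) (b : nat -> R) (c1 c2 : R) : \bar R :=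
  \esum_(w in [set: {ffun 'I_N -> int} * {ffun 'I_N -> int}])
     (Vfun N c1 c2 (path_of 0 w.1) (path_of 0 w.2)
        * PGRW N b (path_of 0 w.1) (path_of 0 w.2))%:E.

Definition PstatGeo (N : nat) (b : nat -> R) (c1 c2 : R)
    (L1 : {ffun 'I_N -> int}) : R :=
  fine (\esum_(v in [set: {ffun 'I_N -> int}])
          (Vfun N c1 c2 (path_of 0 L1) (path_of 0 v)
             * PGRW N b (path_of 0 L1) (path_of 0 v))%:E)
    / fine (EV N b c1 c2).

End Defs.

Arguments wtGP {R}. Arguments wtP {R}. Arguments PZ {R}. Arguments PP {R}.
Arguments geom_pmf {R}. Arguments PGRW {R}. Arguments Vfun {R}. Arguments EV {R}.
Arguments PstatGeo {R}.

(* Main.v *)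
Require Import Defs.
From HB Require Import structures.
From mathcomp Require Import all_boot all_order all_algebra.
From mathcomp Require Import all_classical all_reals.
From mathcomp Require Import ereal esum.
From mathcomp Require Import all_analysis.
Import Order.TTheory GRing.Theory Num.Theory numFieldNormedType.Exports.
Local Open Scope ring_scope.
From mathcomp Require Import zify ring lra.
Local Open Scope classical_set_scope.
Section S.
Variable R : realType.

Lemma prod_ind_all (r : seq nat) (p : pred nat) :
  \prod_(j <- r) ((p j)%:R : R) = (all p r)%:R.
Proof.
elim: r => [|x r IH]; rewrite ?big_nil ?big_cons //= IH.
by case: (p x); rewrite ?mul1r ?mul0r.
Qed.

Lemma bigmax_le_all (r : seq nat) (f : nat -> int) (x s : int) :
  (\big[Num.max/x]_(j <- r) f j <= s) = (x <= s) && all (fun j => f j <= s) r.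
Proof.
elim: r => [|y r IH]; rewrite ?big_nil ?big_cons /= ?andbT // ge_max IH.
by rewrite andbCA.
Qed.

Definition Mx N (P1 P2 : nat -> int) : int :=
  \big[Num.max/(P2 1%N - P1 0%N)]_(1 <= j < N.+1) (P2 j - P1 j.-1).

Lemma prod_Mx N (P1 P2 : nat -> int) s : (0 < N)%N ->
  \prod_(1 <= j < N.+1) (((P2 j - P1 j.-1 <= s)%R : bool)%:R : R)
  = ((Mx N P1 P2 <= s)%R : bool)%:R.
Proof.
move=> N0; rewrite prod_ind_all /Mx bigmax_le_all.
case: N N0 => // N _.
by rewrite /index_iota subSS subn0 /= andbA andbb.
Qed.

Definition Dn N (b : nat -> R) := \prod_(1 <= j < N.+1) (1 - b j)^+2.

Definition ABprod N (b : nat -> R) (P1 P2 : nat -> int) :=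
  \prod_(1 <= j < N.+1)
     ((b j ^ (P1 j - P1 j.-1) * ((P1 j.-1 <= P1 j)%R : bool)%:R)
      * (b j ^ (P2 j - P2 j.-1) * ((P2 j.-1 <= P2 j)%R : bool)%:R)).

Lemma PGRW_split N b P1 P2 : PGRW N b P1 P2 = Dn N b * ABprod N b P1 P2.
Proof.
rewrite /PGRW /Dn /ABprod -big_split /=; apply: eq_bigr => j _.
rewrite /geom_pmf !subr_ge0; ring.
Qed.

Lemma Dn_neq0 N b : (forall j, b j < 1) -> Dn N b != 0.
Proof.
move=> b1; rewrite /Dn prodf_seq_neq0; apply/allP => j _ /=.
by rewrite expf_neq0 // subr_eq0 eq_sym lt_eqF.
Qed.

Lemma wtGP_shift N b c1 c2 x0 s P1 P2 : (0 < N)%N -> P1 0%N = 0 -> P2 0%N = 0 ->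
  0 < c1 -> 0 < c2 -> (forall j, b j < 1) ->
  wtGP N b c1 c2 (fun j => x0 + P1 j) (fun j => x0 - s + P2 j) =
  ((Mx N P1 P2 <= s)%R : bool)%:R * (c1 * c2) ^ (s - Mx N P1 P2)
   * (Vfun N c1 c2 P1 P2 * PGRW N b P1 P2 / Dn N b).
Proof.
move=> N0 h1 h2 c10 c20 b1.
rewrite /wtGP /Vfun -/(Mx N P1 P2) PGRW_split h1 h2.
have -> : x0 + 0 - (x0 - s + 0) = s by ring.
have -> : x0 + P1 N - (x0 - s + P2 N) = s + (P1 N - P2 N) by ring.
rewrite (eq_bigr (fun j => ((b j ^ (P1 j - P1 j.-1) * ((P1 j.-1 <= P1 j)%R:bool)%:R)
   * (b j ^ (P2 j - P2 j.-1) * ((P2 j.-1 <= P2 j)%R:bool)%:R))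
   * ((P2 j - P1 j.-1 <= s)%R : bool)%:R)); last first.
  move=> j _.
  have -> : x0 + P1 j - (x0 + P1 j.-1) = P1 j - P1 j.-1 by ring.
  have -> : x0 - s + P2 j - (x0 - s + P2 j.-1) = P2 j - P2 j.-1 by ring.
  rewrite lerD2l lerD2l.
  have -> : (x0 - s + P2 j <= x0 + P1 j.-1) = (P2 j - P1 j.-1 <= s).
    by apply/idP/idP => ?; lia.
  by [].
rewrite big_split /= -/(ABprod N b P1 P2) prod_Mx //.
have c1n : c1 != 0 by rewrite gt_eqF.
have c2n : c2 != 0 by rewrite gt_eqF.
have qn : c1 * c2 != 0 by rewrite mulf_neq0.
have -> : (c1 * c2) ^ (s - Mx N P1 P2) = c1 ^ s * c2 ^ s / (c1 * c2) ^ Mx N P1 P2.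
  by rewrite expfzDr // invr_expz exprzMl // unitfE.
rewrite expfzDr //.
have := @Dn_neq0 N b b1; have := expfz_neq0 (Mx N P1 P2) qn => h3 h4.
field.
by rewrite h3 h4.
Qed.
Local Open Scope ereal_scope.
Lemma esumZ_le (T : choiceType) (I : set T) (c : R) (a : T -> \bar R) :
  (0 <= c)%R -> (forall i, 0 <= a i) ->
  \esum_(i in I) (c%:E * a i) <= c%:E * \esum_(i in I) a i.
Proof.
move=> c0 a0; apply: ge_ereal_sup => _ [X [finX XI] <-] /=.
rewrite fsbig_finite //= -ge0_sume_distrr //.
apply: lee_wpmul2l; first by rewrite lee_fin.
apply: ereal_sup_ubound; exists X => //.
by rewrite fsbig_finite.
Qed.

Lemma esumZ (T : choiceType) (I : set T) (c : R) (a : T -> \bar R) :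
  (0 <= c)%R -> (forall i, 0 <= a i) ->
  \esum_(i in I) (c%:E * a i) = c%:E * \esum_(i in I) a i.
Proof.
move=> c0 a0; have [->|cn0] := eqVneq c 0%R.
  by rewrite mul0e esum1 // => i _; rewrite mul0e.
have cp : (0 < c)%R by rewrite lt_def cn0.
apply/le_anti; rewrite esumZ_le //=.
have h : \esum_(i in I) a i = \esum_(i in I) (c^-1%:E * (c%:E * a i)).
  by apply: eq_esum => i _; rewrite muleA -EFinM mulVf // mul1e.
rewrite h; apply: (@le_trans _ _ (c%:E * (c^-1%:E * \esum_(i in I) (c%:E * a i)))).
  apply: lee_wpmul2l; first by rewrite lee_fin.
  apply: esumZ_le; first by rewrite invr_ge0.
  by move=> i; apply: mule_ge0; rewrite ?lee_fin.
by rewrite muleA -EFinM mulfV // mul1e.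
Qed.

Lemma geo_esum (q : R) : (0 <= q)%R -> (q < 1)%R ->
  \esum_(n in [set: nat]) (q ^+ n)%:E = ((1 - q)^-1)%:E.
Proof.
move=> q0 q1.
rewrite -nneseries_esumT; last by move=> n; rewrite lee_fin exprn_ge0.
have h : (`|q| < 1)%R by rewrite ger0_norm.
move: (@cvg_geometric_series R 1 q h); rewrite mul1r => cv'.
have -> : (fun n => \sum_(0 <= i < n) (q ^+ i)%:E)%E = EFin \o series (geometric 1 q).
  apply/funext => n /=; rewrite /series /= sumEFin; congr (_%:E).
  by apply: eq_bigr => i _; rewrite /geometric /= mul1r.
rewrite EFin_lim; last by apply: is_cvg_geometric_series.
by rewrite (cvg_lim _ cv').
Qed.

Lemma geo_int (q : R) (M : int) : (0 <= q)%R -> (q < 1)%R ->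
  \esum_(s in [set: int]) ((((M <= s)%R : bool)%:R * q ^ (s - M))%R)%:E = ((1 - q)^-1)%:E.
Proof.
move=> q0 q1; rewrite -(@geo_esum q q0 q1).
have -> : \esum_(s in [set: int]) ((((M <= s)%R : bool)%:R * q ^ (s - M))%R)%:E
    = \esum_(s in [set s : int | (M <= s)%R]) (q ^ (s - M))%:E.
  rewrite [RHS]esum_mkcond; apply: eq_esum => s _.
  have -> : (s \in [set s0 : int | (M <= s0)%R]%classic) = (M <= s)%R by apply/idP/idP; rewrite inE.
  by case: (M <= s)%R; rewrite ?mul1r ?mul0r.
have -> : [set s : int | (M <= s)%R] = (fun n : nat => (M + n%:Z)%R) @` setT.
  apply/seteqP; split => [s /= hs|_ [n _ <-] /=].
    by exists `|s - M|%N => //; rewrite gez0_abs ?subr_ge0 // subrKC.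
  by rewrite lerDl.
rewrite esum_image; last by move=> m n _ _ /addrI /eqP; rewrite eqz_nat => /eqP.
apply: eq_esum => n _ /=.
by have -> : (M + n%:Z - M = n%:Z)%R by ring.
Qed.
Local Close Scope ereal_scope.

Lemma ext0_lt n (v : 'I_n -> int) j (H : (j < n)%N) : ext0 v j = v (Ordinal H).
Proof. by rewrite /ext0 insubT. Qed.

Lemma ext0_ord n (v : 'I_n -> int) (i : 'I_n) : ext0 v i = v i.
Proof. by rewrite /ext0 valK. Qed.

Definition e2 N (x0 : int) (p : {ffun 'I_N -> int} * int) : {ffun 'I_N.+1 -> int} :=
  [ffun i : 'I_N.+1 => x0 - p.2 + path_of 0 p.1 i].

Lemma e2_bij N x0 : bijective (e2 N x0).
Proof.
exists (fun f : {ffun 'I_N.+1 -> int} => ([ffun j : 'I_N => f (lift ord0 j) - f ord0], x0 - f ord0)).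
  case=> w s /=; congr pair; last by rewrite /e2 ffunE /=; ring.
  apply/ffunP => j; rewrite /e2 !ffunE /= add0n ext0_ord; ring.
move=> f; apply/ffunP => i; rewrite /e2 ffunE /=.
case: i => [[|k] Hk] /=.
  rewrite addr0 (_ : Ordinal Hk = ord0); last by apply: val_inj.
  ring.
have Hk' : (k < N)%N by [].
rewrite (@ext0_lt _ _ _ Hk') ffunE.
rewrite (_ : lift ord0 (Ordinal Hk') = Ordinal Hk); last by apply: val_inj.
ring.
Qed.

Lemma wtGP_ext N (b : nat -> R) (c1 c2 : R) (l1 l1' l2 l2' : nat -> int) :
  (forall j, (j <= N)%N -> l1 j = l1' j) -> (forall j, (j <= N)%N -> l2 j = l2' j) ->
  wtGP N b c1 c2 l1 l2 = wtGP N b c1 c2 l1' l2'.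
Proof.
move=> h1 h2; rewrite /wtGP !h1 ?h2 //; congr (_ * _).
apply: eq_big_nat => j /andP[hj1 hj2].
have hj : (j <= N)%N by [].
have hj' : (j.-1 <= N)%N by rewrite (leq_trans (leq_pred j)).
by rewrite !h1 ?h2.
Qed.

Lemma geom_ge0 (q : R) n : 0 <= q <= 1 -> 0 <= geom_pmf q n.
Proof.
move=> /andP[q0 q1]; rewrite /geom_pmf mulr_ge0 ?mulr_ge0 ?exprz_ge0 ?subr_ge0 //.
Qed.

Lemma PGRW_ge0 N (b : nat -> R) P1 P2 : (forall j, 0 < b j < 1) -> 0 <= PGRW N b P1 P2.
Proof.
move=> hb; rewrite /PGRW; apply: prodr_ge0 => j _.
have /andP[h1 h2] := hb j.
by rewrite mulr_ge0 // geom_ge0 // ltW ?h1 ?ltW.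
Qed.

Lemma Vfun_ge0 N (c1 c2 : R) P1 P2 : 0 < c1 -> 0 < c2 -> 0 <= Vfun N c1 c2 P1 P2.
Proof. by move=> h1 h2; rewrite /Vfun mulr_ge0 // exprz_ge0 // ?mulr_ge0 // ltW. Qed.

Lemma Dn_gt0 N (b : nat -> R) : (forall j, 0 < b j < 1) -> 0 < Dn N b.
Proof.
move=> hb; rewrite /Dn; apply: prodr_gt0 => j _.
have /andP[h1 h2] := hb j.
by rewrite exprn_gt0 // subr_gt0.
Qed.

Lemma path_shift N (x0 : int) (L1 : {ffun 'I_N -> int}) j : (j <= N)%N ->
  path_of x0 (fun i => x0 + L1 i) j = x0 + path_of 0 L1 j.
Proof.
case: j => [|j] hj /=; first by rewrite addr0.
by rewrite (@ext0_lt _ _ _ hj) (@ext0_lt _ _ _ hj).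
Qed.

Definition VP N (b : nat -> R) (c1 c2 : R) (L1 L2 : {ffun 'I_N -> int}) : R :=
  Vfun N c1 c2 (path_of 0 L1) (path_of 0 L2) * PGRW N b (path_of 0 L1) (path_of 0 L2).

Lemma VP_ge0 N b c1 c2 L1 L2 : (forall j, 0 < b j < 1) -> 0 < c1 -> 0 < c2 ->
  0 <= VP N b c1 c2 L1 L2.
Proof. by move=> hb h1 h2; rewrite /VP mulr_ge0 ?Vfun_ge0 ?PGRW_ge0. Qed.

Lemma wtP_eq N (b : nat -> R) (c1 c2 : R) (x0 : int) (L1 : {ffun 'I_N -> int}) :
  (0 < N)%N -> (forall j, (0 < b j < 1)%R) -> (0 < c1)%R -> (0 < c2)%R -> (c1 * c2 < 1)%R ->
  wtP N b c1 c2 (path_of x0 (fun i => (x0 + L1 i)%R)) =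
  ((((1 - c1 * c2)^-1 / Dn N b)%R)%:E * \esum_(v in [set: {ffun 'I_N -> int}]) (VP N b c1 c2 L1 v)%:E)%E.
Proof.
move=> N0 hb h1 h2 hq.
have hb1 : forall j, (b j < 1)%R by move=> j; case/andP: (hb j).
rewrite /wtP (reindex_esum [set: {ffun 'I_N -> int} * int] [set: {ffun 'I_N.+1 -> int}] (e2 N x0)); last first.
  by rewrite setTT_bijective; exact: e2_bij.
set G := fun w : {ffun 'I_N -> int} => (VP N b c1 c2 L1 w / Dn N b)%R.
have G0 : forall w, (0 <= G w)%R.
  by move=> w; rewrite /G divr_ge0 ?VP_ge0 // ltW // Dn_gt0.
pose F := fun (w : {ffun 'I_N -> int}) (s : int) =>
   ((((Mx N (path_of 0 L1) (path_of 0 w) <= s)%R : bool)%:R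
     * (c1 * c2) ^ (s - Mx N (path_of 0 L1) (path_of 0 w)) * G w)%R)%:E.
transitivity (\esum_(p in [set: {ffun 'I_N -> int} * int]) F p.1 p.2).
  apply: eq_esum => -[w s] _ /=; congr (_%:E).
  rewrite (@wtGP_ext N b c1 c2 _ (fun j => x0 + path_of 0 L1 j) _ (fun j => x0 - s + path_of 0 w j)).
  - by rewrite wtGP_shift // /G /VP mulrA.
  - by move=> j hj; rewrite path_shift.
  - move=> j hj; have hj' : (j < N.+1)%N by [].
    by rewrite (@ext0_lt _ _ _ hj') /e2 ffunE.
have -> : [set: {ffun 'I_N -> int} * int] = [set: {ffun 'I_N -> int}] `*`` (fun _ => [set: int]).
  by apply/seteqP; split.
rewrite -(@esum_esum R _ _ [set: {ffun 'I_N -> int}] (fun _ => [set: int]) F); last first.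
  move=> w s _ _; rewrite /F lee_fin mulr_ge0 // mulr_ge0 // ?exprz_ge0 ?mulr_ge0 ?ltW //.
rewrite -esumZ; last first.
  by move=> w; rewrite lee_fin VP_ge0.
  by rewrite divr_ge0 ?invr_ge0 ?subr_ge0 ?ltW // Dn_gt0.
apply: eq_esum => w _ /=.
transitivity (\esum_(s in [set: int]) ((G w)%:E * ((((Mx N (path_of 0 L1) (path_of 0 w) <= s)%R : bool)%:R
     * (c1 * c2) ^ (s - Mx N (path_of 0 L1) (path_of 0 w)))%R)%:E)%E).
  by apply: eq_esum => s _; rewrite -EFinM mulrC.
rewrite esumZ //; last first.
  move=> s; rewrite lee_fin mulr_ge0 // ?exprz_ge0 ?mulr_ge0 ?ltW //.
rewrite geo_int ?mulr_ge0 ?ltW // -EFinM; congr (_%:E).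
rewrite /G; have := @Dn_gt0 N b hb; rewrite lt0r => /andP[hD _].
ring.
Qed.

Lemma EV_VP N (b : nat -> R) c1 c2 :
  EV N b c1 c2 = \esum_(w in [set: {ffun 'I_N -> int} * {ffun 'I_N -> int}]) (VP N b c1 c2 w.1 w.2)%:E.
Proof. by []. Qed.

Lemma EV_nested N (b : nat -> R) c1 c2 : (forall j, 0 < b j < 1) -> 0 < c1 -> 0 < c2 ->
  EV N b c1 c2 = \esum_(L in [set: {ffun 'I_N -> int}]) \esum_(v in [set: {ffun 'I_N -> int}]) (VP N b c1 c2 L v)%:E.
Proof.
move=> hb h1 h2; rewrite EV_VP.
have -> : [set: {ffun 'I_N -> int} * {ffun 'I_N -> int}] = [set: {ffun 'I_N -> int}] `*`` (fun _ => [set: {ffun 'I_N -> int}]).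
  by apply/seteqP; split.
rewrite -(@esum_esum R _ _ [set: {ffun 'I_N -> int}] (fun _ => [set: {ffun 'I_N -> int}]) (fun L v => (VP N b c1 c2 L v)%:E)) //.
by move=> L v _ _; rewrite lee_fin VP_ge0.
Qed.

Lemma path_ffun N (x0 : int) (L : {ffun 'I_N -> int}) :
  path_of x0 [ffun i => x0 + L i] = path_of x0 (fun i => x0 + L i).
Proof.
apply/funext => -[|j] //=; rewrite /ext0; case: insub => //= i.
by rewrite ffunE.
Qed.

Lemma PZ_eq N (b : nat -> R) (c1 c2 : R) (x0 : int) :
  (0 < N)%N -> (forall j, (0 < b j < 1)%R) -> (0 < c1)%R -> (0 < c2)%R -> (c1 * c2 < 1)%R ->
  PZ N b c1 c2 x0 = ((((1 - c1 * c2)^-1 / Dn N b)%R)%:E * EV N b c1 c2)%E.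
Proof.
move=> N0 hb h1 h2 hq.
rewrite /PZ (reindex_esum [set: {ffun 'I_N -> int}] [set: {ffun 'I_N -> int}]
  (fun L : {ffun 'I_N -> int} => [ffun i => x0 + L i])); last first.
  rewrite setTT_bijective.
  exists (fun v : {ffun 'I_N -> int} => [ffun i => v i - x0]).
    by move=> L; apply/ffunP => i; rewrite !ffunE; ring.
  by move=> v; apply/ffunP => i; rewrite !ffunE; ring.
rewrite EV_nested // -esumZ; last 2 first.
- by rewrite divr_ge0 ?invr_ge0 ?subr_ge0 ?ltW // Dn_gt0.
- by move=> L; apply: esum_ge0 => v _; rewrite lee_fin VP_ge0.
apply: eq_esum => L _ /=.
by rewrite path_ffun wtP_eq.
Qed.

Lemma expz_tele (c : R) (P : nat -> int) n : c != 0 -> P 0%N = 0 ->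
  c ^ P n = \prod_(1 <= j < n.+1) c ^ (P j - P j.-1).
Proof.
move=> c0 P0; elim: n => [|n IH]; first by rewrite big_geq // P0 expr0z.
rewrite big_nat_recr //= -IH -expfzDr //; congr (_ ^ _); ring.
Qed.

Lemma esum_shift (g : int -> R) (c : int) :
  \esum_(t in [set: int]) (g (t - c))%:E = \esum_(t in [set: int]) (g t)%:E.
Proof.
rewrite [RHS](reindex_esum [set: int] [set: int] (fun t : int => t - c)) //.
rewrite setTT_bijective; exists (fun t => t + c) => t /=; ring.
Qed.

Definition join n (p : {ffun 'I_n -> int} * int) : {ffun 'I_n.+1 -> int} :=
  [ffun i : 'I_n.+1 => if (val i < n)%N then ext0 p.1 i else p.2].

Arguments join {n}.
Lemma join_bij n : bijective (@join n).
Proof.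
exists (fun f : {ffun 'I_n.+1 -> int} =>
  ([ffun j : 'I_n => f (widen_ord (leqnSn n) j)], f ord_max)).
  case=> w t /=; congr pair; last by rewrite /join ffunE /= ltnn.
  apply/ffunP => j; rewrite /join !ffunE /= ltn_ord ext0_ord //.
move=> f; apply/ffunP => i; rewrite /join ffunE /=.
case: ltnP => hi.
  rewrite (@ext0_lt _ _ _ hi) ffunE; congr (f _); exact: val_inj.
by congr (f _); apply: val_inj => /=; apply/eqP; rewrite eqn_leq hi -ltnS ltn_ord.
Qed.

Lemma path_join_le n (p : {ffun 'I_n -> int} * int) j : (j <= n)%N ->
  path_of 0 (join p) j = path_of 0 p.1 j.
Proof.
case: j => [|j] //= hj; have hj' : (j < n.+1)%N by apply: ltnW.
by rewrite (@ext0_lt _ _ _ hj') /join ffunE /= hj.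
Qed.

Lemma path_join_last n (p : {ffun 'I_n -> int} * int) :
  path_of 0 (join p) n.+1 = p.2.
Proof.
have h : (n < n.+1)%N by [].
by rewrite /= (@ext0_lt _ _ _ h) /join ffunE /= ltnn.
Qed.

Local Open Scope ereal_scope.
Lemma prod_esum_le n (g : nat -> int -> R) (K : nat -> R) :
  (forall j t, (0 <= g j t)%R) ->
  (forall j, \esum_(t in [set: int]) (g j t)%:E <= (K j)%:E) ->
  \esum_(L in [set: {ffun 'I_n -> int}])
     (\prod_(1 <= j < n.+1) g j (path_of 0 L j - path_of 0 L j.-1))%:E
  <= (\prod_(1 <= j < n.+1) K j)%:E.
Proof.
move=> g0 hK.
have K0 : forall j, (0 <= K j)%R.
  move=> j; rewrite -lee_fin; apply: le_trans (hK j); apply: esum_ge0 => t _.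
  by rewrite lee_fin.
elim: n => [|n IH].
  rewrite !big_geq //.
  have -> : [set: {ffun 'I_0 -> int}] = [set [ffun i : 'I_0 => 0%R]].
    by apply/seteqP; split => // f _; apply/ffunP => -[].
  by rewrite esum_set1 ?big_geq // lee_fin prodr_ge0.
rewrite (reindex_esum [set: {ffun 'I_n -> int} * int] [set: {ffun 'I_n.+1 -> int}] (@join n)); last first.
  by rewrite setTT_bijective; exact: join_bij.
pose F := fun (w : {ffun 'I_n -> int}) (t : int) =>
  ((\prod_(1 <= j < n.+1) g j (path_of 0 w j - path_of 0 w j.-1))
    * g n.+1 (t - path_of 0 w n))%R%:E.
rewrite (@eq_esum R _ _ _ (fun p => F p.1 p.2)); last first.
  move=> p _; rewrite /F big_nat_recr // path_join_last /= (@path_join_le n p n (leqnn n)).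
  congr (EFin (GRing.mul _ _)).
  apply: eq_big_nat => j /andP[hj1 hj2].
  rewrite !path_join_le //; first by rewrite (leq_trans (leq_pred j)).
have -> : [set: {ffun 'I_n -> int} * int] = [set: {ffun 'I_n -> int}] `*`` (fun _ => [set: int]).
  by apply/seteqP; split.
rewrite -(@esum_esum R _ _ [set: {ffun 'I_n -> int}] (fun _ => [set: int]) F); last first.
  by move=> w t _ _; rewrite /F lee_fin mulr_ge0 // prodr_ge0.
apply: (@le_trans _ _ (\esum_(w in [set: {ffun 'I_n -> int}])
   ((K n.+1)%:E * (\prod_(1 <= j < n.+1) g j (path_of 0 w j - path_of 0 w j.-1))%:E))).
  apply: le_esum => w _.
  rewrite /F; under eq_esum do rewrite EFinM.
  rewrite esumZ //; last by move=> t; rewrite lee_fin.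
    rewrite [X in _ <= X]muleC; apply: lee_wpmul2l; first by rewrite lee_fin prodr_ge0.
    by rewrite (esum_shift (g n.+1)).
  by rewrite prodr_ge0.
rewrite esumZ //; last by move=> w; rewrite lee_fin prodr_ge0.
rewrite big_nat_recr //= EFinM muleC.
by apply: lee_wpmul2r; rewrite ?lee_fin.
Qed.
Local Close Scope ereal_scope.

Lemma esum_geom_c (b c : R) : 0 < b < 1 -> 0 < c -> b * c < 1 ->
  (\esum_(t in [set: int]) (c ^ t * geom_pmf b t)%:E = ((1 - b) / (1 - b * c))%:E)%E.
Proof.
move=> /andP[b0 b1] c0 bc1.
transitivity (\esum_(t in [set: int]) ((1 - b)%:E * ((((0 <= t)%R : bool)%:R * (b * c) ^ (t - 0)))%:E)%E).
  apply: eq_esum => t _; rewrite -EFinM; congr (_%:E).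
  rewrite /geom_pmf subr0 exprzMl ?unitfE ?gt_eqF //; ring.
rewrite esumZ; last 2 first.
- by rewrite subr_ge0 ltW.
- by move=> t; rewrite lee_fin mulr_ge0 ?exprz_ge0 ?mulr_ge0 ?ler0n ?ltW.
by rewrite geo_int ?mulr_ge0 ?ltW // -EFinM.
Qed.

Lemma le_bigmax_seed (r : seq nat) (f : nat -> int) x : x <= \big[Num.max/x]_(j <- r) f j.
Proof.
elim: r => [|y r IH]; rewrite ?big_nil ?big_cons //.
by rewrite le_max IH orbT.
Qed.

Lemma le_bigmax_mem (r : seq nat) (f : nat -> int) x j : j \in r ->
  f j <= \big[Num.max/x]_(i <- r) f i.
Proof.
elim: r => [|y r IH] //; rewrite in_cons big_cons le_max => /orP[/eqP->|/IH->].
  by rewrite lexx.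
by rewrite orbT.
Qed.

Lemma mono_le (P : nat -> int) N : (forall j, (1 <= j <= N)%N -> P j.-1 <= P j) ->
  forall j k, (j <= k)%N -> (k <= N)%N -> P j <= P k.
Proof.
move=> hm j k; elim: k => [|k IH] hjk hkN.
  by move: hjk; rewrite leqn0 => /eqP->.
move: hjk; rewrite leq_eqVlt => /orP[/eqP->//|hjk].
apply: le_trans (IH hjk (ltnW hkN)) _.
by have := hm k.+1; rewrite hkN /=; apply.
Qed.

Lemma expz_le1p (c : R) (e E : int) : 0 < c -> 0 <= e -> e <= E -> c ^ e <= 1 + c ^ E.
Proof.
case: e => [m|m] // c0 _; case: E => [m'|m'] // hle.
rewrite lez_nat in hle; rewrite -!exprnP.
have [c1|c1] := leP c 1.
  by apply: le_trans (exprn_ile1 _ (ltW c0) c1) _; rewrite lerDl exprn_ge0 // ltW.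
apply: le_trans (ler_weXn2l (ltW c1) hle) _.
by rewrite lerDr.
Qed.

Definition Gp N (b : nat -> R) (P : nat -> int) := \prod_(1 <= j < N.+1) geom_pmf (b j) (P j - P j.-1).

Lemma Gp_ge0 N b P : (forall j, 0 < b j < 1) -> 0 <= Gp N b P.
Proof.
move=> hb; apply: prodr_ge0 => j _; have /andP[h1 h2] := hb j.
by rewrite geom_ge0 // ltW ?h1 ?ltW.
Qed.

Lemma Gp_zero N b (P : nat -> int) :
  ~~ all (fun j => P j.-1 <= P j) (index_iota 1 N.+1) -> Gp N b P = 0.
Proof.
move=> m; apply/eqP; rewrite /Gp prodf_seq_eq0.
move: m; rewrite -has_predC => /hasP [j jin /= hj]; apply/hasP; exists j => //=.
by rewrite /geom_pmf subr_ge0 (negPf hj) mul0r.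
Qed.

Lemma VP_bound_path N (b : nat -> R) (c1 c2 : R) (P1 P2 : nat -> int) :
  (0 < N)%N -> P1 0%N = 0 -> P2 0%N = 0 -> (forall j, 0 < b j < 1) -> 0 < c1 -> 0 < c2 ->
  Vfun N c1 c2 P1 P2 * PGRW N b P1 P2 <=
  ((1 + c2 ^ P1 N) * Gp N b P1) * ((1 + c1 ^ P2 N) * Gp N b P2).
Proof.
move=> N0 h1 h2 hb c10 c20.
have -> : PGRW N b P1 P2 = Gp N b P1 * Gp N b P2 by rewrite /PGRW big_split.
case: (boolP (all (fun j => P1 j.-1 <= P1 j) (index_iota 1 N.+1))) => m1; last first.
  by rewrite (@Gp_zero N b _ m1) !(mulr0, mul0r).
case: (boolP (all (fun j => P2 j.-1 <= P2 j) (index_iota 1 N.+1))) => m2; last first.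
  by rewrite (@Gp_zero N b _ m2) !(mulr0, mul0r).
have hm1 : forall j, (1 <= j <= N)%N -> P1 j.-1 <= P1 j.
  by move=> j hj; apply: (allP m1); rewrite mem_index_iota.
have hm2 : forall j, (1 <= j <= N)%N -> P2 j.-1 <= P2 j.
  by move=> j hj; apply: (allP m2); rewrite mem_index_iota.
have mo1 := @mono_le P1 N hm1; have mo2 := @mono_le P2 N hm2.
rewrite (_ : _ * _ = ((1 + c1 ^ P2 N) * (1 + c2 ^ P1 N)) * (Gp N b P1 * Gp N b P2)); last by ring.
apply: ler_wpM2r; first by rewrite mulr_ge0 ?Gp_ge0.
rewrite /Vfun -/(Mx N P1 P2) exprzMl ?unitfE ?gt_eqF // -mulrA -expfzDr ?gt_eqF //.
set M := Mx N P1 P2.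
have hx : P2 1%N - P1 0%N <= M by apply: le_bigmax_seed.
have hNm : P2 N - P1 N.-1 <= M by apply: le_bigmax_mem; rewrite mem_index_iota N0 ltnSn.
have hM : M <= P2 N.
  rewrite /M /Mx bigmax_le_all; apply/andP; split.
    by rewrite h1 subr0 mo2.
  apply/allP => j; rewrite mem_index_iota => /andP[j1 jN].
  have a1 : 0 <= P1 j.-1 by rewrite -h1 mo1 // (leq_trans (leq_pred j)).
  have a2 : P2 j <= P2 N by rewrite mo2.
  lia.
have p21 : 0 <= P2 1%N by rewrite -h2 mo2.
have p1N : P1 N.-1 <= P1 N by rewrite hm1 // N0 /=.
apply: ler_pM; [by rewrite exprz_ge0 // ltW | by rewrite exprz_ge0 // ltW | |].
  by apply: expz_le1p => //; lia.
by apply: expz_le1p => //; lia.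
Qed.

Local Open Scope ereal_scope.
Lemma esum_cGp N (b : nat -> R) (c : R) : (forall j, (0 < b j < 1)%R) -> (0 < c)%R ->
  (forall j, (b j * c < 1)%R) ->
  \esum_(L in [set: {ffun 'I_N -> int}]) ((c ^ path_of 0 L N * Gp N b (path_of 0 L))%R)%:E
  <= (\prod_(1 <= j < N.+1) ((1 - b j) / (1 - b j * c)))%R%:E.
Proof.
move=> hb c0 hbc.
rewrite (@eq_esum R _ _ _ (fun L : {ffun 'I_N -> int} =>
   (\prod_(1 <= j < N.+1) (fun j t => c ^ t * geom_pmf (b j) t)%R j
        (path_of 0 L j - path_of 0 L j.-1))%:E)); last first.
  move=> L _; congr (_%:E).
  by rewrite (@expz_tele c (path_of 0 L) N) ?gt_eqF // /Gp -big_split.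
apply: (@prod_esum_le N (fun j t => c ^ t * geom_pmf (b j) t)%R (fun j => (1 - b j) / (1 - b j * c))%R).
  move=> j t; have /andP[h1 h2] := hb j.
  apply: mulr_ge0; first by rewrite exprz_ge0 // ltW.
  by apply: geom_ge0; rewrite (ltW h1) (ltW h2).
by move=> j; rewrite esum_geom_c.
Qed.

Lemma esum_A N (b : nat -> R) (c : R) : (forall j, (0 < b j < 1)%R) -> (0 < c)%R ->
  (forall j, (b j * c < 1)%R) ->
  exists K : R, \esum_(L in [set: {ffun 'I_N -> int}])
     (((1 + c ^ path_of 0 L N) * Gp N b (path_of 0 L))%R)%:E <= K%:E.
Proof.
move=> hb c0 hbc.
exists (\prod_(1 <= j < N.+1) ((1 - b j) / (1 - b j * 1)) + \prod_(1 <= j < N.+1) ((1 - b j) / (1 - b j * c)))%R.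
rewrite (@eq_esum R _ _ _ (fun L : {ffun 'I_N -> int} =>
   ((1 ^ path_of 0 L N * Gp N b (path_of 0 L))%R)%:E + ((c ^ path_of 0 L N * Gp N b (path_of 0 L))%R)%:E)); last first.
  by move=> L _; rewrite -EFinD exp1rz mulrDl.
have G0 : forall (d : R) (L : {ffun 'I_N -> int}), (0 < d)%R -> 0 <= ((d ^ path_of 0 L N * Gp N b (path_of 0 L))%R)%:E.
  move=> d L d0; rewrite lee_fin; apply: mulr_ge0; [by rewrite exprz_ge0 // ltW | exact: Gp_ge0].
rewrite esumD; [|by move=> L _; apply: G0|by move=> L _; apply: G0].
rewrite EFinD; apply: leeD; apply: esum_cGp => // j; rewrite ?mulr1; by case/andP: (hb j).
Qed.

Lemma EV_fin N (b : nat -> R) (c1 c2 : R) : (0 < N)%N -> (forall j, (0 < b j < 1)%R) ->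
  (0 < c1)%R -> (0 < c2)%R -> (forall j, (b j * c1 < 1)%R) -> (forall j, (b j * c2 < 1)%R) ->
  EV N b c1 c2 < +oo.
Proof.
move=> N0 hb h1 h2 hc1 hc2.
pose A c (L : {ffun 'I_N -> int}) := ((1 + c ^ path_of 0 L N) * Gp N b (path_of 0 L))%R.
have A0 : forall c L, (0 < c)%R -> (0 <= A c L)%R.
  by move=> c L c0; rewrite mulr_ge0 ?Gp_ge0 // addr_ge0 ?exprz_ge0 ?ltW.
have [K1 hK1] := @esum_A N b c1 hb h1 hc1.
have [K2 hK2] := @esum_A N b c2 hb h2 hc2.
have K10 : (0 <= K1)%R.
  by rewrite -lee_fin; apply: le_trans hK1; apply: esum_ge0 => L _; rewrite lee_fin A0.
have K20 : (0 <= K2)%R.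
  by rewrite -lee_fin; apply: le_trans hK2; apply: esum_ge0 => L _; rewrite lee_fin A0.
apply: (@le_lt_trans _ _ (K1 * K2)%R%:E); last exact: ltry.
rewrite EV_VP.
apply: (@le_trans _ _ (\esum_(w in [set: {ffun 'I_N -> int} * {ffun 'I_N -> int}]) (A c2 w.1 * A c1 w.2)%R%:E)).
  by apply: le_esum => w _; rewrite lee_fin /VP VP_bound_path.
have -> : [set: {ffun 'I_N -> int} * {ffun 'I_N -> int}] = [set: {ffun 'I_N -> int}] `*`` (fun _ => [set: {ffun 'I_N -> int}]).
  by apply/seteqP; split.
rewrite -(@esum_esum R _ _ [set: {ffun 'I_N -> int}] (fun _ => [set: {ffun 'I_N -> int}]) (fun L v => (A c2 L * A c1 v)%R%:E)); last first.
  by move=> L v _ _; rewrite lee_fin mulr_ge0 ?A0.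
apply: (@le_trans _ _ (\esum_(L in [set: {ffun 'I_N -> int}]) (K1%:E * (A c2 L)%:E))).
  apply: le_esum => L _.
  rewrite (@eq_esum R _ _ _ (fun v => (A c2 L)%:E * (A c1 v)%:E)); last by move=> v _; rewrite EFinM.
  rewrite esumZ; [|exact: A0|by move=> v; rewrite lee_fin A0].
  rewrite [X in _ <= X]muleC; apply: lee_wpmul2l; [by rewrite lee_fin A0|exact: hK1].
rewrite esumZ //; last by move=> L; rewrite lee_fin A0.
by rewrite EFinM; apply: lee_wpmul2l; rewrite ?lee_fin.
Qed.
Local Close Scope ereal_scope.

Lemma fineZ (C : R) (x : \bar R) : 0 < C -> fine (C%:E * x)%E = C * fine x.
Proof.
move=> C0; case: x => [r| |] /=; rewrite ?mulr0 //.
  by rewrite gt0_muley ?lte_fin.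
by rewrite gt0_muleNy ?lte_fin.
Qed.
End S.
Arguments Dn {R}. Arguments VP {R}. Arguments Gp {R}.

Theorem proposition2p17 (R : realType) (N : nat) (a : int -> R) (c1 c2 : R)
    (k : int) :
  (0 < N)%N ->
  (forall i : int, a (i + N%:Z) = a i) ->
  (forall i : int, 0 < a i < 1) ->
  0 < c1 -> 0 < c2 ->
  (forall i j : int, a i * a j < 1) ->
  (forall i : int, a i * c1 < 1) ->
  (forall i : int, a i * c2 < 1) ->
  c1 * c2 < 1 ->
  let b : nat -> R := fun j => a (k + j%:Z) in
  forall x0 : int,
    (PZ N b c1 c2 x0 < +oo)%E /\ (EV N b c1 c2 < +oo)%E /\
    forall L1 : {ffun 'I_N -> int}, PP N b c1 c2 x0 L1 = PstatGeo N b c1 c2 L1.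
Proof.
move=> N0 _ ha h1 h2 _ hc1 hc2 hq b x0.
have hb : forall j, 0 < b j < 1 by move=> j; exact: ha.
have hbc1 : forall j, b j * c1 < 1 by move=> j; exact: hc1.
have hbc2 : forall j, b j * c2 < 1 by move=> j; exact: hc2.
have EVf := @EV_fin R N b c1 c2 N0 hb h1 h2 hbc1 hbc2.
have C0 : 0 < (1 - c1 * c2)^-1 / Dn N b.
  by rewrite divr_gt0 ?invr_gt0 ?subr_gt0 // (@Dn_gt0 R N b hb).
have PZe := @PZ_eq R N b c1 c2 x0 N0 hb h1 h2 hq.
have EVfin : EV N b c1 c2 \is a fin_num.
  by rewrite ge0_fin_numE // EV_VP esum_ge0 // => w _; rewrite lee_fin VP_ge0.
split; first by rewrite PZe -(fineK EVfin) -EFinM ltry.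
split => // L1.
rewrite /PP /PstatGeo wtP_eq // PZe !fineZ //.
set s := fine _; set e := fine _.
by rewrite invfM mulrACA mulfV ?mul1r // gt_eqF.
Qed.
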